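(* Let $C\subseteq\mathbb F_2^n$ be a classical linear code with parity check matrix $H$, let $\Gamma\subseteq2^{[n]}$, and let $\hat\Gamma=\{e\neq\emptyset: e\subseteq\gamma \text{ for some }\gamma\in\Gamma\}$. Then $\gamma_1\cup\gamma_2\in\Delta^{D}$ for all $\gamma_1,\gamma_2\in\Gamma$ if and only if $\mathrm{syn}(e_1)\neq0$ for all $e_1\in\hat\Gamma$ and $\mathrm{syn}(e_1+e_2)\neq0$ for all distinct $e_1,e_2\in\hat\Gamma$.
   Context: Vectors in $\mathbb F_2^n$ are identified with their support sets (so $e_1+e_2$ corresponds to symmetric difference). The syndrome is $\mathrm{syn}(e)=He$. $\Delta^{D}=\{\gamma\subseteq[n]: \mathrm{syn}(e)\neq0 \text{ for all nonzero } e \text{ with } \mathrm{supp}(e)\subseteq\gamma\}$. *)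

(* Defs.v *)
(* Vectors of F_2^n are identified with their supports
   (subsets of 'I_n); addition of vectors is symmetric difference. *)
From mathcomp Require Import all_boot all_order all_algebra.
Set Implicit Arguments. Unset Strict Implicit. Unset Printing Implicit Defensive.
Import GRing.Theory.
Local Open Scope ring_scope.

Definition vec_of (n : nat) (e : {set 'I_n}) : 'cV['F_2]_n :=
  \col_i (if i \in e then 1 else 0).

Definition syn (m n : nat) (H : 'M['F_2]_(m, n)) (e : {set 'I_n}) : 'cV['F_2]_m :=
  H *m vec_of e.

Definition symdiff (n : nat) (e1 e2 : {set 'I_n}) : {set 'I_n} :=
  (e1 :\: e2) :|: (e2 :\: e1).

Definition DeltaD (m n : nat) (H : 'M['F_2]_(m, n)) (gamma : {set 'I_n}) : Prop :=
  forall e : {set 'I_n}, e != set0 -> e \subset gamma -> syn H e != 0.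

Definition Gamma_hat (n : nat) (Gamma : {set {set 'I_n}}) : {set {set 'I_n}} :=
  [set e | (e != set0) && [exists g in Gamma, e \subset g]].

(* Main.v *)
Require Import Defs.
From mathcomp Require Import all_boot all_order all_algebra.
Local Open Scope ring_scope.

Lemma symdiff_split {n : nat} (e g : {set 'I_n}) :
  symdiff (e :&: g) (e :\: g) = e.
Proof.
apply/setP => x; rewrite /symdiff !inE.
by case: (x \in e); case: (x \in g).
Qed.

Lemma ghatP {n : nat} {Gamma : {set {set 'I_n}}} {e g} :
  e != set0 -> g \in Gamma -> e \subset g -> e \in Gamma_hat Gamma.
Proof.
move=> ne gG sub; rewrite /Gamma_hat inE ne /=.
by apply/existsP; exists g; rewrite gG.
Qed.

Theorem lemma12 (m n : nat) (H : 'M['F_2]_(m, n)) (Gamma : {set {set 'I_n}}) :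
  (forall g1 g2, g1 \in Gamma -> g2 \in Gamma -> DeltaD H (g1 :|: g2)) <->
  ((forall e1, e1 \in Gamma_hat Gamma -> syn H e1 != 0) /\
   (forall e1 e2, e1 \in Gamma_hat Gamma -> e2 \in Gamma_hat Gamma ->
      e1 != e2 -> syn H (symdiff e1 e2) != 0)).
Proof.
split.
- move=> D; split.
  + move=> e1; rewrite inE => /andP[ne /existsP[g /andP[gG sub]]].
    apply: (D g g gG gG e1 ne); by rewrite setUid.
  + move=> e1 e2; rewrite !inE => /andP[_ /existsP[g1 /andP[g1G s1]]]
      /andP[_ /existsP[g2 /andP[g2G s2]]] neq.
    apply: (D g1 g2 g1G g2G).
    * apply/set0Pn.
      have [x Hx] : exists x, (x \in e1) != (x \in e2).
        apply/existsP; apply: contraR neq => /existsPn Hn.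
        by apply/eqP/setP => x; move: (Hn x); rewrite negbK => /eqP.
      exists x; rewrite /symdiff !inE.
      by move: Hx; case: (x \in e1); case: (x \in e2).
    * rewrite /symdiff; apply/subsetP => x; rewrite !inE => /orP[] /andP[_ h].
        by rewrite (subsetP s1 _ h).
      by rewrite (subsetP s2 _ h) orbT.
- move=> [A B] g1 g2 g1G g2G e ne sub.
  have s1 : e :&: g1 \subset g1 by apply: subsetIr.
  have s2 : e :\: g1 \subset g2.
    apply/subsetP => x; rewrite !inE => /andP[nx xe].
    by move: (subsetP sub _ xe); rewrite inE (negbTE nx).
  case: (eqVneq (e :\: g1) set0) => [E2|E2].
    have -> : e = e :&: g1.
      by rewrite -{1}(symdiff_split e g1) E2 /symdiff !setD0 set0D setU0.
    apply: A; apply: ghatP s1 => //.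
    by move: ne; rewrite -{1}(symdiff_split e g1) E2 /symdiff setD0 set0D setU0.
  case: (eqVneq (e :&: g1) set0) => [E1|E1].
    have -> : e = e :\: g1.
      by rewrite -{1}(symdiff_split e g1) E1 /symdiff setD0 set0D set0U.
    exact: A (ghatP E2 g2G s2).
  rewrite -(symdiff_split e g1); apply: B.
  + exact: ghatP E1 g1G s1.
  + exact: ghatP E2 g2G s2.
  + apply: contra E1 => /eqP E.
    apply/eqP/setP => x; rewrite !inE.
    move/setP: E => /(_ x); rewrite !inE.
    by case: (x \in e); case: (x \in g1).
Qed.
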